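(* Let $\mathbb{F}\in\{\mathbb{R},\mathbb{C}\}$, let $\Phi=\{\varphi_i\}_{i=1}^M$ be a Parseval frame for $\mathbb{F}^N$ and let $\Psi=\{\psi_i\}_{i=1}^M$ be a Naimark complement of $\Phi$. Let $k\leq\min\{N,M-N\}$. If $v_k(\Phi_K)=c_{M,N,k}$ for every $K\subseteq[M]$ with $|K|=k$, then $v_k(\Psi_K)=c_{M,M-N,k}$ for every $K\subseteq[M]$ with $|K|=k$.
   Context: A Parseval frame for $\mathbb{F}^N$ is a family $\{\varphi_i\}_{i=1}^M\subseteq\mathbb{F}^N$ whose $N\times M$ matrix $\Phi$ (columns $\varphi_i$) satisfies $\Phi\Phi^*=I$. A Naimark complement of $\Phi$ is any $\Psi=\{\psi_i\}_{i=1}^M\subseteq\mathbb{F}^{M-N}$ with $\Psi^*\Psi=I-\Phi^*\Phi$. For $K\subseteq[M]$, $\Phi_K$ is the submatrix of columns indexed by $K$; $v_k(F)=\sqrt{\det(F^*F)}$; and $c_{M,N,k}=\sqrt{{M\choose k}^{-1}{N\choose k}}$. *)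

(* Defs.v *)
From HB Require Import structures.
From mathcomp Require Import all_boot all_order all_algebra.
Set Implicit Arguments. Unset Strict Implicit. Unset Printing Implicit Defensive.
Import Order.TTheory GRing.Theory Num.Theory.
Local Open Scope ring_scope.

(* Complex case: scalars in a numeric closed field C (e.g. algC, complex R). *)
Definition adjC (C : numClosedFieldType) m n (A : 'M[C]_(m, n)) : 'M[C]_(n, m) :=
  map_mx Num.conj A^T.

(* Phi_K : the columns of Phi indexed by K (in increasing order). *)
Definition colsubset (T : Type) m n (K : {set 'I_n}) (A : 'M[T]_(m, n))
  : 'M[T]_(m, #|K|) := colsub (@enum_val _ (mem K)) A.

Definition parsevalC (C : numClosedFieldType) N M (Phi : 'M[C]_(N, M)) : Prop :=
  Phi *m adjC Phi = 1%:M.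
Definition naimarkC (C : numClosedFieldType) N M (Phi : 'M[C]_(N, M))
  (Psi : 'M[C]_(M - N, M)) : Prop :=
  adjC Psi *m Psi = 1%:M - adjC Phi *m Phi.
Definition vkC (C : numClosedFieldType) m n (F : 'M[C]_(m, n)) : C :=
  sqrtC (\det (adjC F *m F)).
Definition cC (C : numClosedFieldType) (M N k : nat) : C :=
  sqrtC (('C(M, k))%:R^-1 * ('C(N, k))%:R).

(* Real case: scalars in a real closed field R; the adjoint is the transpose. *)
Definition parsevalR (R : rcfType) N M (Phi : 'M[R]_(N, M)) : Prop :=
  Phi *m Phi^T = 1%:M.
Definition naimarkR (R : rcfType) N M (Phi : 'M[R]_(N, M))
  (Psi : 'M[R]_(M - N, M)) : Prop :=
  Psi^T *m Psi = 1%:M - Phi^T *m Phi.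
Definition vkR (R : rcfType) m n (F : 'M[R]_(m, n)) : R :=
  Num.sqrt (\det (F^T *m F)).
Definition cR (R : rcfType) (M N k : nat) : R :=
  Num.sqrt (('C(M, k))%:R^-1 * ('C(N, k))%:R).

(* Main.v *)
Require Import Defs.
From mathcomp Require Import all_boot all_order all_algebra.
From mathcomp Require Import ring zify.
Import Order.TTheory GRing.Theory Num.Theory.
Set Implicit Arguments. Unset Strict Implicit. Unset Printing Implicit Defensive.
Local Open Scope ring_scope.

Section Core.
Variable F : numFieldType.

Lemma sylvester m n (A : 'M[F]_(m, n)) (B : 'M[F]_(n, m)) :
  \det (1%:M + A *m B) = \det (1%:M + B *m A).
Proof.
have e1 : block_mx 1%:M (-A) B 1%:M =
   block_mx 1%:M 0 B 1%:M *m block_mx 1%:M (-A) 0 (1%:M + B *m A).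
  by rewrite mulmx_block !mul1mx !mul0mx !mulmx1 !addr0 mulmxN addrCA addNr addr0.
have e2 : block_mx 1%:M (-A) B 1%:M =
   block_mx (1%:M + A *m B) (-A) 0 1%:M *m block_mx 1%:M 0 B 1%:M.
  by rewrite mulmx_block !mul1mx !mul0mx !mulmx1 !mulmx0 !add0r mulNmx addrK.
have := congr1 determinant (etrans (esym e1) e2).
by rewrite !det_mulmx det_ublock det_lblock !det1 !mul1r !mulr1 det_ublock det1 mulr1 => ->.
Qed.

Variable M : nat.
Implicit Types (K S T J : {set 'I_M}).

Definition selE K : 'M[F]_(M, #|K|) := \matrix_(i, j) (i == enum_val j)%:R.



Lemma sum_sel_val K (f : 'I_#|K| -> F) j0 :
  \sum_j (enum_val j0 == enum_val j)%:R * f j = f j0.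
Proof.
rewrite (bigD1 j0) //= eqxx mul1r big1 ?addr0 // => j /negPf nj.
by rewrite (inj_eq enum_val_inj) eq_sym nj mul0r.
Qed.

Lemma sum_sel_out K (f : 'I_#|K| -> F) i :
  i \notin K -> \sum_j (i == enum_val j)%:R * f j = 0.
Proof.
move=> iK; rewrite big1 // => j _.
have Hj : enum_val j \in K := enum_valP j.
case: (eqVneq i (enum_val j)) => [e|ne]; first by rewrite e Hj in iK.
by rewrite mul0r.
Qed.

Lemma selE_tmul K : (selE K)^T *m selE K = 1%:M.
Proof.
apply/matrixP => j l; rewrite !mxE.
rewrite (eq_bigr (fun i => (i == enum_val j)%:R * (i == enum_val l)%:R)); last first.
  by move=> i _; rewrite !mxE.
rewrite (bigD1 (enum_val j)) //= eqxx mul1r big1 ?addr0.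
  by rewrite (inj_eq enum_val_inj).
by move=> i /negPf ->; rewrite mul0r.
Qed.

Lemma selE_sub K X j l : ((selE K)^T *m X *m selE K) j l = X (enum_val j) (enum_val l).
Proof.
rewrite !mxE (bigD1 (enum_val l)) //= big1 ?addr0.
  rewrite [selE K _ _]mxE eqxx mulr1 mxE (bigD1 (enum_val j)) //= big1 ?addr0.
    by rewrite !mxE eqxx mul1r.
  by move=> i /negPf ni; rewrite !mxE ni mul0r.
by move=> i /negPf ni; rewrite [selE K i l]mxE ni mulr0.
Qed.

Lemma selE_mid_val K (Y : 'M[F]_#|K|) j l :
  (selE K *m Y *m (selE K)^T) (enum_val j) (enum_val l) = Y j l.
Proof.
rewrite !mxE.
rewrite (eq_bigr (fun l' => (enum_val l == enum_val l')%:R * (selE K *m Y) (enum_val j) l')); last first.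
  by move=> l' _; rewrite !mxE mulrC.
rewrite sum_sel_val mxE.
rewrite (eq_bigr (fun j' => (enum_val j == enum_val j')%:R * Y j' l)); last first.
  by move=> j' _; rewrite !mxE.
by rewrite sum_sel_val.
Qed.

Lemma selE_mid_out K (Y : 'M[F]_#|K|) i i' :
  (i \notin K) || (i' \notin K) -> (selE K *m Y *m (selE K)^T) i i' = 0.
Proof.
case/orP => H; rewrite !mxE.
  rewrite big1 // => l _; rewrite !mxE.
  rewrite (eq_bigr (fun j => (i == enum_val j)%:R * Y j l)); last by move=> j _; rewrite mxE.
  by rewrite sum_sel_out // mul0r.
rewrite (eq_bigr (fun l => (i' == enum_val l)%:R * (selE K *m Y) i l)); last first.
  by move=> l _; rewrite !mxE mulrC.
by rewrite sum_sel_out.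
Qed.

Definition pad S (X : 'M[F]_M) : 'M[F]_M :=
  \matrix_(i, j) if (i \in S) && (j \in S) then X i j else (i == j)%:R.

Lemma pad_det S X : \det (pad S X) = \det ((selE S)^T *m X *m selE S).
Proof.
set Y := (selE S)^T *m X *m selE S.
have -> : pad S X = 1%:M + selE S *m ((Y - 1%:M) *m (selE S)^T).
  have e : selE S *m ((Y - 1%:M) *m (selE S)^T) =
      selE S *m Y *m (selE S)^T - selE S *m 1%:M *m (selE S)^T.
    by rewrite mulmxA mulmxBr mulmxBl.
  rewrite e; apply/matrixP => i i'.
  have eB (P Q : 'M[F]_M) : (P - Q) i i' = P i i' - Q i i' by rewrite !mxE.
  rewrite [in RHS]mxE eB [pad _ _ _ _]mxE.
  case: (boolP ((i \in S) && (i' \in S))) => [/andP[iS i'S]|H].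
    rewrite -(enum_rankK_in iS iS) -(enum_rankK_in i'S i'S).
    rewrite !selE_mid_val /Y selE_sub !mxE (inj_eq enum_val_inj); ring.
  have H' : (i \notin S) || (i' \notin S) by rewrite -negb_and.
  by rewrite !selE_mid_out // subrr addr0 mxE.
by rewrite sylvester mulmxBl mul1mx mulmxBl -mulmxA selE_tmul mulmx1 addrC subrK.
Qed.


Lemma det_row_unit (A B : 'M[F]_M) i0 :
  (forall j, A i0 j = (j == i0)%:R) -> (forall j, B i0 j = (j == i0)%:R) ->
  (forall r s, r != i0 -> s != i0 -> A r s = B r s) -> \det A = \det B.
Proof.
move=> hA hB hAB.
have cof (C : 'M[F]_M) : (forall j, C i0 j = (j == i0)%:R) -> \det C = cofactor C i0 i0.
  move=> hC; rewrite (expand_det_row _ i0) (bigD1 i0) //= hC eqxx mul1r big1 ?addr0 //.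
  by move=> j /negPf nj; rewrite hC nj mul0r.
rewrite (cof A hA) (cof B hB) /cofactor; congr (_ * \det _).
apply/matrixP => r s; rewrite !mxE; by apply: hAB; rewrite eq_sym neq_lift.
Qed.

Lemma padL1 S (Y : 'M[F]_M) i0 c : i0 \in S ->
  \det (pad S (Y + c *: delta_mx i0 i0)) = \det (pad S Y) + c * \det (pad (S :\ i0) Y).
Proof.
move=> iS.
pose C := \matrix_(r, s) if r == i0 then (s == i0)%:R else pad S Y r s.
have -> : \det (pad (S :\ i0) Y) = \det C.
  apply: det_row_unit (i0) _ _ _.
  - by move=> j; rewrite !mxE !inE eqxx /= eq_sym.
  - by move=> j; rewrite !mxE eqxx.
  by move=> r s nr ns; rewrite !mxE (negPf nr) !inE nr ns.
rewrite -[\det (pad S Y)]mul1r; apply: (determinant_multilinear (i0 := i0)).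
- apply/rowP => j; rewrite !mxE eqxx iS /=.
  case: (boolP (j \in S)) => jS /=.
    by rewrite [j == i0]eq_sym; case: (i0 == j); rewrite /= ?mulr1 ?mulr0 ?mul1r.
  have nj : j != i0 by apply: contraNneq jS => ->.
  by rewrite eq_sym (negPf nj) !mulr0 addr0.
- apply/matrixP => r s; rewrite !mxE.
  have nr : (lift i0 r == i0) = false by rewrite eq_sym (negPf (neq_lift _ _)).
  by rewrite nr /= mulr0 addr0.
apply/matrixP => r s; rewrite !mxE.
have nr : (lift i0 r == i0) = false by rewrite eq_sym (negPf (neq_lift _ _)).
by rewrite nr /= mulr0 addr0.
Qed.


Definition dg (d : 'I_M -> F) : 'M[F]_M := \matrix_(i, j) ((i == j)%:R * d i).

Definition pmeR S (d : 'I_M -> F) (X : 'M[F]_M) :=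
  \sum_(T : {set 'I_M} | T \subset S) (\prod_(i in S :\: T) d i) * \det (pad T X).

Lemma pme_base S X : \det (pad S X) = pmeR S (fun _ => 0) X.
Proof.
rewrite /pmeR (bigD1 S) //= setDv big_set0 mul1r big1 ?addr0 // => T /andP[TS nTS].
have : S :\: T != set0.
  rewrite setD_eq0; apply: contra nTS => ST; by rewrite eqEsubset TS ST.
case/set0Pn => i iST; by rewrite (big_setD1 _ iST) /= !mul0r.
Qed.

Lemma pme_ind n S d X : (forall i : 'I_M, (n <= i)%N -> d i = 0) ->
  \det (pad S (dg d + X)) = pmeR S d X.
Proof.
elim: n S d X => [|n IH] S d X hd.
  have -> : dg d = 0 by apply/matrixP => i j; rewrite !mxE hd ?mulr0.
  rewrite add0r pme_base /pmeR; apply: eq_bigr => T _; congr (_ * _).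
  by apply: eq_bigr => i _; rewrite hd.
case: (ltnP n M) => nM; last first.
  apply: IH => i ni; apply: hd; have := ltn_ord i; rewrite ltnNge.
  by move/negP; case; apply: leq_trans ni.
pose i0 := Ordinal nM.
pose d' := fun i : 'I_M => if i == i0 then 0 else d i.
have hd' : forall i : 'I_M, (n <= i)%N -> d' i = 0.
  move=> i ni; rewrite /d'; case: eqP => // /eqP ne.
  apply: hd; rewrite ltn_neqAle ni andbT; apply: contra ne => /eqP e.
  by apply/eqP/val_inj; rewrite /= e.
have edd : forall i, i != i0 -> d' i = d i by move=> i /negPf ne; rewrite /d' ne.
have edg : dg d + X = (dg d' + X) + d i0 *: delta_mx i0 i0.
  apply/matrixP => i j; rewrite !mxE; rewrite /d'.
  case: (eqVneq i i0) => [->|ne]; last by rewrite mulr0 addr0.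
  case: (eqVneq i0 j) => [<-|ne] /=.
    by rewrite mulr0 !mul1r mulr1 add0r addrC.
  by rewrite !mulr0 !mul0r addr0.
case: (boolP (i0 \in S)) => iS; last first.
  have -> : pad S (dg d + X) = pad S (dg d' + X).
    apply/matrixP => i j; rewrite !mxE.
    case: (boolP (i \in S)) => //= ii; case: (j \in S) => //=.
    by rewrite edd //; apply: contraNneq iS => <-.
  rewrite (IH _ _ _ hd') /pmeR; apply: eq_bigr => T TS; congr (_ * _).
  apply: eq_bigr => i; rewrite inE => /andP[_ ii]; rewrite edd //.
  by apply: contraNneq iS => <-.
rewrite edg padL1 // (IH _ _ _ hd') (IH _ _ _ hd') /pmeR.
rewrite (bigID (fun T : {set 'I_M} => i0 \in T)) /= [in RHS](bigID (fun T : {set 'I_M} => i0 \in T)) /=.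
have -> : \sum_(T : {set 'I_M} | (T \subset S) && (i0 \notin T))
     (\prod_(i in S :\: T) d' i) * \det (pad T X) = 0.
  rewrite big1 // => T /andP[_ nT].
  have iST : i0 \in S :\: T by rewrite inE nT iS.
  by rewrite (big_setD1 _ iST) /d' eqxx /= !mul0r.
rewrite addr0; congr (_ + _).
  apply: eq_bigr => T /andP[_ iT]; congr (_ * _); apply: eq_bigr => i.
  rewrite inE => /andP[nT _]; rewrite edd //; by apply: contraNneq nT => ->.
rewrite big_distrr /=.
apply: eq_big => [T|T]; first by rewrite subsetD1.
rewrite subsetD1 => /andP[TS nT].
have iST : i0 \in S :\: T by rewrite inE nT iS.
rewrite (big_setD1 _ iST) mulrA; congr (_ * _ * _).
have -> : (S :\: T) :\ i0 = (S :\ i0) :\: T.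
  by apply/setP => i; rewrite !inE; case: (i \in T); case: (i == i0).
apply: eq_bigr => i; rewrite !inE => /andP[_ /andP[ne _]]; by rewrite edd.
Qed.

Lemma pme S d X : \det (pad S (dg d + X)) = pmeR S d X.
Proof. by apply: (pme_ind (n := M)) => i; rewrite leqNgt ltn_ord. Qed.


Lemma sum_subsets_card K (g : nat -> F) :
  \sum_(T : {set 'I_M} | T \subset K) g #|T| =
  \sum_(j < M.+1) 'C(#|K|, j)%:R * g j.
Proof.
rewrite (partition_big (fun T : {set 'I_M} => (inord #|T| : 'I_M.+1)) predT) //=.
apply: eq_bigr => j _.
have cT : forall T : {set 'I_M}, (inord #|T| == j :> 'I_M.+1) = (#|T| == j).
  move=> T; rewrite -(inj_eq val_inj) /= inordK // ltnS.
  by rewrite -[X in (_ <= X)%N](card_ord M) max_card.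
rewrite (eq_bigr (fun _ => g j)); last by move=> T /andP[_]; rewrite cT => /eqP ->.
rewrite (eq_bigl (fun T => T \in [set A : {set 'I_M} | A \subset K & #|A| == j])); last first.
  by move=> T; rewrite !inE cT.
by rewrite sumr_const cards_draws mulr_natl.
Qed.


Lemma poly_eq_nat (p q : {poly F}) :
  (forall n : nat, p.[n.+1%:R] = q.[n.+1%:R]) -> p = q.
Proof.
move=> h; apply/eqP; rewrite -subr_eq0; apply/eqP.
apply: (@roots_geq_poly_eq0 _ _ [seq n.+1%:R | n <- iota 0 (size (p - q))]).
- by apply/allP => x /mapP[n _ ->]; rewrite rootE hornerD hornerN h subrr.
- rewrite map_inj_uniq ?iota_uniq // => m n /eqP; rewrite eqr_nat.
  by move/eqP => [].
by rewrite size_map size_iota.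
Qed.

Lemma coefX1n n i : (('X + 1) ^+ n)`_i = ('C(n, i))%:R :> F.
Proof.
rewrite exprD1n coef_sum.
case: (ltnP n i) => ni.
  rewrite bin_small // big1 // => l _; rewrite coefMn coefXn.
  have : (l < i)%N by apply: leq_trans (ltn_ord l) _.
  by rewrite ltn_neqAle eq_sym => /andP[/negPf -> _]; rewrite mul0rn.
have ilt : (i < n.+1)%N by [].
rewrite (bigD1 (Ordinal ilt)) //= big1 ?addr0 ?coefMn ?coefXn ?eqxx //.
move=> l nl; rewrite coefMn coefXn.
have -> : (i == l) = false.
  by apply/negbTE; apply: contra nl => /eqP e; apply/eqP/val_inj; rewrite /= e.
by rewrite mul0rn.
Qed.

Lemma sylvester_t m n t (A : 'M[F]_(m, n)) (B : 'M[F]_(n, m)) : t != 0 ->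
  \det (t%:M + A *m B) * t ^+ n = t ^+ m * \det (t%:M + B *m A).
Proof.
move=> t0.
have e (p q : nat) (P : 'M[F]_(p, q)) (Q : 'M[F]_(q, p)) :
    t%:M + P *m Q = t *: (1%:M + (t^-1 *: P) *m Q).
  by rewrite scalerDr scalemx1 -scalemxAl scalerA divff // scale1r.
rewrite (e _ _ A B) (e _ _ B A) !detZ sylvester.
rewrite -!scalemxAl -!scalemxAr; ring.
Qed.

Lemma det_block_sc n1 n2 (a : F) (Bu : 'M[F]_(n1, n2)) (Cl : 'M[F]_(n2, n1)) D :
  a != 0 ->
  \det (block_mx a%:M Bu Cl D) = a ^+ n1 * \det (D - a^-1 *: (Cl *m Bu)).
Proof.
move=> a0.
have -> : block_mx a%:M Bu Cl D =
   block_mx 1%:M 0 (a^-1 *: Cl) 1%:M *m block_mx a%:M Bu 0 (D - a^-1 *: (Cl *m Bu)).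
  rewrite mulmx_block !mul1mx !mul0mx !addr0.
  rewrite mul_mx_scalar scalerA mulfV // scale1r.
  by rewrite -scalemxAl addrC subrK.
by rewrite det_mulmx det_lblock det_ublock !det1 !mul1r det_scalar.
Qed.

Lemma selE_EEt K i i' :
  (selE K *m (selE K)^T) i i' = ((i == i') && (i \in K))%:R.
Proof.
have -> : selE K *m (selE K)^T = selE K *m 1%:M *m (selE K)^T by rewrite mulmx1.
case: (boolP ((i \in K) && (i' \in K))) => [/andP[iS i'S]|H].
  rewrite -(enum_rankK_in iS iS) -(enum_rankK_in i'S i'S).
  by rewrite selE_mid_val mxE (inj_eq enum_val_inj) enum_valP andbT.
have H' : (i \notin K) || (i' \notin K) by rewrite -negb_and.
rewrite selE_mid_out //; case: eqP => //= e; move: H'; rewrite e orbb => /negPf ->.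
by [].
Qed.


Variables (N : nat) (A : 'M[F]_(M, N)) (B : 'M[F]_(N, M)).
Hypothesis hBA : B *m A = 1%:M.

Lemma P1_scalar J t : t != 0 -> t + 1 != 0 ->
  \det (dg (fun i => if i \in J then 0 else t) + A *m B) * t ^+ (N + #|J|) =
  t ^+ M * ((t + 1) ^+ N * ((t / (t + 1)) ^+ #|J| *
     \det ((selE J)^T *m (A *m B) *m selE J))).
Proof.
move=> t0 t10.
set E := selE J.
have hd : dg (fun i => if i \in J then 0 else t) = t%:M - t *: (E *m E^T).
  apply/matrixP => i j.
  rewrite (_ : (t%:M - t *: (E *m E^T)) i j = t%:M i j - t * (E *m E^T) i j); last first.
    by rewrite !mxE.
  rewrite selE_EEt !mxE.
  case: (i == j); case: (i \in J); rewrite /= ?mulr1 ?mul1r ?mulr0 ?mul0r ?subrr ?subr0 //.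
have hCR : dg (fun i => if i \in J then 0 else t) + A *m B =
    t%:M + row_mx A E *m col_mx B (- t *: E^T).
  by rewrite mul_row_col hd -scalemxAr scaleNr -addrA [_ + A *m B]addrC.
rewrite hCR sylvester_t // mul_col_row scalar_mx_block add_block_mx hBA.
rewrite -(scalemxAl (-t) E^T E) selE_tmul scalemx1 -!raddfD /= addrN !add0r.
rewrite det_block_sc //.
congr (_ * (_ * _)).
rewrite raddf0 sub0r -!scalemxAl scalerA -scaleNr -detZ; congr (\det _).
by rewrite !mulmxA mulrN opprK mulrC.
Qed.


Lemma cardC_ord T : #|~: T| = (M - #|T|)%N.
Proof. have := cardsC T; rewrite card_ord => e; by rewrite -[X in (X - _)%N]e addKn. Qed.

Lemma prod_dJ J T (t : F) :
  \prod_(i in setT :\: T) (if i \in J then 0 else t) =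
  if J \subset T then t ^+ (M - #|T|) else 0.
Proof.
case: (boolP (J \subset T)) => JT.
  rewrite (eq_bigr (fun _ => t)); last first.
    move=> i; rewrite !inE andbT => iT.
    by case: (boolP (i \in J)) => // iJ; move: iT; rewrite (subsetP JT).
  by rewrite prodr_const setTD cardC_ord.
case/subsetPn: JT => i iJ iT.
have iST : i \in setT :\: T by rewrite !inE iT.
by rewrite (big_setD1 _ iST) /= iJ mul0r.
Qed.

Lemma pad_setT X : pad setT X = X.
Proof.
apply/matrixP => i j; rewrite !mxE !inE /=.
done.
Qed.

Lemma P1_coef J k : (#|J| <= k)%N -> (k <= N)%N -> (N <= M)%N ->
  \sum_(T : {set 'I_M} | (J \subset T) && (#|T| == k)) \det (pad T (A *m B)) =
  ('C(N - #|J|, N - k))%:R * \det (pad J (A *m B)).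
Proof.
move=> Jk kN NM.
set G := A *m B; set j := #|J|.
pose Sp := \sum_(T : {set 'I_M} | J \subset T) \det (pad T G) *: 'X^(M - #|T|).
pose Q := 'X^(M - N) * ('X + 1) ^+ (N - j) * (\det (pad J G))%:P.
have eSQ : Sp = Q.
  apply: poly_eq_nat => n.
  set t : F := n.+1%:R.
  have t0 : t != 0 by rewrite pnatr_eq0.
  have t10 : t + 1 != 0 by rewrite /t natr1 pnatr_eq0.
  have eS : Sp.[t] = \det (dg (fun i => if i \in J then 0 else t) + G).
    rewrite -[dg _ + G]pad_setT pme /pmeR /Sp horner_sum.
    rewrite [RHS](eq_bigl (fun _ => true)); last by move=> T; rewrite subsetT.
    rewrite [LHS]big_mkcond /=.
    apply: eq_bigr => T _; rewrite prod_dJ.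
    by case: (J \subset T); rewrite ?hornerZ ?hornerXn ?mul0r // mulrC.
  have eQ : Q.[t] = t ^+ (M - N) * (t + 1) ^+ (N - j) * \det (pad J G).
    by rewrite /Q !hornerE.
  rewrite eS eQ.
  have hP := P1_scalar J t0 t10.
  rewrite -/G -pad_det in hP.
  have tNj : t ^+ (N + j) != 0 by rewrite expf_neq0.
  apply: (mulIf tNj); rewrite hP.
  have e1 : t ^+ M = t ^+ (M - N) * t ^+ N by rewrite -exprD subnK.
  have e2 : (t + 1) ^+ N = (t + 1) ^+ (N - j) * (t + 1) ^+ j.
    by rewrite -exprD subnK // (leq_trans Jk kN).
  have t1j : (t + 1) ^+ j != 0 by rewrite expf_neq0.
  rewrite e1 e2 exprD expr_div_n.
  by field.
have := congr1 (fun p : {poly F} => p`_(M - k)) eSQ.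
rewrite /Sp /Q coef_sum coefMC coefXnM.
have -> : (M - k < M - N)%N = false by apply/negbTE; rewrite -leqNgt; lia.
have -> : (M - k - (M - N) = N - k)%N by lia.
rewrite coefX1n => <-.
rewrite big_mkcondr /=; apply: eq_bigr => T JT.
rewrite coefZ coefXn.
have hT : (#|T| <= M)%N by rewrite -[X in (_ <= X)%N](card_ord M) max_card.
have -> : (M - k == M - #|T|)%N = (#|T| == k).
  by apply/eqP/eqP; lia.
by case: (#|T| == k); rewrite ?mulr1 ?mulr0.
Qed.


Lemma dg_const (t : F) : dg (fun _ => t) = t%:M.
Proof. by apply/matrixP => i j; rewrite !mxE mulrC mulr_natr. Qed.

Lemma P2_coef k : (k <= M - N)%N -> (N <= M)%N ->
  \sum_(T : {set 'I_M} | #|T| == k) \det (pad T (1%:M - A *m B)) = ('C(M - N, k))%:R.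
Proof.
move=> kMN NM.
set H := 1%:M - A *m B.
pose Sp := \sum_(T : {set 'I_M}) \det (pad T H) *: 'X^(M - #|T|).
pose Q := 'X^N * ('X + 1) ^+ (M - N) : {poly F}.
have eSQ : Sp = Q.
  apply: poly_eq_nat => n.
  set t : F := n.+1%:R.
  have t0 : t != 0 by rewrite pnatr_eq0.
  have t10 : t + 1 != 0 by rewrite /t natr1 pnatr_eq0.
  have eS : Sp.[t] = \det (dg (fun _ => t) + H).
    rewrite -[dg _ + H]pad_setT pme /pmeR /Sp horner_sum.
    rewrite [RHS](eq_bigl (fun _ => true)); last by move=> T; rewrite subsetT.
    apply: eq_bigr => T _; rewrite prodr_const setTD cardC_ord.
    by rewrite hornerZ hornerXn mulrC.
  have eQ : Q.[t] = t ^+ N * (t + 1) ^+ (M - N) by rewrite /Q !hornerE.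
  rewrite eS eQ dg_const.
  have eH : t%:M + H = (t + 1)%:M + (- A) *m B.
    by rewrite /H raddfD /= addrA mulNmx.
  have hS := sylvester_t (- A) B t10.
  rewrite -eH in hS. rewrite mulmxN hBA -raddfN -raddfD /= addrK det_scalar in hS.
  have t1N : (t + 1) ^+ N != 0 by rewrite expf_neq0.
  apply: (mulIf t1N); rewrite hS.
  have e1 : (t + 1) ^+ M = (t + 1) ^+ (M - N) * (t + 1) ^+ N by rewrite -exprD subnK.
  by rewrite e1; ring.
have := congr1 (fun p : {poly F} => p`_(M - k)) eSQ.
rewrite /Sp /Q coef_sum coefXnM.
have -> : (M - k < N)%N = false by apply/negbTE; rewrite -leqNgt; lia.
have -> : (M - k - N = (M - N) - k)%N by lia.
rewrite coefX1n bin_sub // => <-.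
rewrite big_mkcond /=; apply: eq_bigr => T _.
rewrite coefZ coefXn.
have hT : (#|T| <= M)%N by rewrite -[X in (_ <= X)%N](card_ord M) max_card.
have -> : (M - k == M - #|T|)%N = (#|T| == k).
  by apply/eqP/eqP; lia.
by case: (#|T| == k); rewrite ?mulr1 ?mulr0.
Qed.


Lemma sum_ind_ord (f : nat -> F) (v : F) k : (k <= M)%N ->
  \sum_(i < M.+1) f i * (if i == k :> nat then v else 0) = f k * v.
Proof.
move=> kM; have kM1 : (k < M.+1)%N by [].
rewrite (bigD1 (Ordinal kM1)) //= eqxx big1 ?addr0 // => i ni.
have -> : (nat_of_ord i == k) = false.
  by apply/negbTE; apply: contra ni => /eqP e; apply/eqP/val_inj; rewrite /= e.
by rewrite mulr0.
Qed.

Lemma NleM : (N <= M)%N.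
Proof.
have := mxrankM_maxl B A; rewrite hBA mxrank1 => h.
by apply: leq_trans h (rank_leq_col B).
Qed.

Theorem core k : (k <= N)%N -> (k <= M - N)%N ->
  (forall K, #|K| = k -> \det ((selE K)^T *m (A *m B) *m selE K) =
                          ('C(M, k))%:R^-1 * ('C(N, k))%:R) ->
  forall K, #|K| = k -> \det ((selE K)^T *m (1%:M - A *m B) *m selE K) =
                          ('C(M, k))%:R^-1 * ('C(M - N, k))%:R.
Proof.
move=> kN kMN hyp.
have NM := NleM.
have kM : (k <= M)%N by lia.
set G := A *m B.
set c := ('C(M, k))%:R^-1 * ('C(N, k))%:R : F.
have ha : forall T, #|T| = k -> \det (pad T G) = c by move=> T hT; rewrite pad_det hyp.
pose h (j : nat) := \sum_(i < M.+1) ('C(M - j, i))%:R * (if i == (M - k)%N :> nat then c else 0).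
pose alpha (j : nat) := h j / ('C(N - j, N - k))%:R.
have hal : forall J, (#|J| <= k)%N -> \det (pad J G) = alpha #|J|.
  move=> J Jk.
  have hC : ('C(N - #|J|, N - k))%:R != 0 :> F.
    by rewrite pnatr_eq0 -lt0n bin_gt0; lia.
  rewrite /alpha; apply: (mulIf hC); rewrite divfK // mulrC -P1_coef //.
  rewrite (eq_bigr (fun _ => c)); last by move=> T /andP[_ /eqP]; apply: ha.
  rewrite (reindex_inj (@setC_inj _)) /=.
  rewrite big_mkcondr /=.
  rewrite (eq_bigl (fun T : {set 'I_M} => T \subset ~: J)); last first.
    by move=> T; rewrite subsetC.
  rewrite (eq_bigr (fun T : {set 'I_M} => (if #|T| == (M - k)%N then c else 0))); last first.
    move=> T _; rewrite cardC_ord.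
    have hT : (#|T| <= M)%N by rewrite -[X in (_ <= X)%N](card_ord M) max_card.
    have -> : (M - #|T| == k)%N = (#|T| == M - k)%N by apply/eqP/eqP; lia.
    by [].
  rewrite (sum_subsets_card (~: J) (fun i => if i == (M - k)%N then c else 0)).
  by rewrite cardC_ord.
pose beta := \sum_(i < M.+1) ('C(k, i))%:R * ((-1) ^+ i * alpha i).
have hb : forall K, #|K| = k -> \det (pad K (1%:M - G)) = beta.
  move=> K hK.
  have -> : 1%:M - G = dg (fun _ => 1) + (- G) by rewrite dg_const.
  rewrite pme /pmeR.
  rewrite (eq_bigr (fun T : {set 'I_M} => (-1) ^+ #|T| * alpha #|T|)).
    by rewrite (sum_subsets_card K (fun n => (-1) ^+ n * alpha n)) hK.
  move=> T TK; rewrite prodr_const expr1n mul1r pad_det mulmxN mulNmx -scaleN1r detZ -pad_det hal //.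
  by rewrite -hK subset_leq_card.
have hsum := P2_coef kMN NM.
rewrite (eq_bigr (fun _ => beta)) in hsum; last by move=> T /eqP; apply: hb.
rewrite (eq_bigl (fun T => T \in [set A : {set 'I_M} | #|A| == k])) in hsum; last first.
  by move=> T; rewrite inE.
rewrite sumr_const card_draws card_ord in hsum.
move=> K hK; rewrite -pad_det hb // -hsum -[beta *+ _]mulr_natr mulrCA mulVf ?mulr1 //.
by rewrite pnatr_eq0 -lt0n bin_gt0.
Qed.
End Core.


Lemma colsubset_sel (F : numFieldType) m M (K : {set 'I_M}) (X : 'M[F]_(m, M)) :
  colsubset K X = X *m selE F K.
Proof.
apply/matrixP => i j; rewrite /colsubset !mxE (bigD1 (enum_val j)) //= big1 ?addr0.
  by rewrite mxE eqxx mulr1.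
by move=> l /negPf nl; rewrite mxE nl mulr0.
Qed.

Lemma sqrt_inj_pos (R : rcfType) (x c : R) : 0 < c -> Num.sqrt x = Num.sqrt c -> x = c.
Proof.
move=> c0 e.
have : 0 < Num.sqrt x by rewrite e sqrtr_gt0.
rewrite sqrtr_gt0 => x0.
by rewrite -(sqr_sqrtr (ltW x0)) e sqr_sqrtr // ltW.
Qed.

Lemma sqrtC_inj (C : numClosedFieldType) (x c : C) : sqrtC x = sqrtC c -> x = c.
Proof. by move=> e; rewrite -(sqrtCK x) e sqrtCK. Qed.

Lemma adjC_sel (C : numClosedFieldType) M N (K : {set 'I_M}) (X : 'M[C]_(N, M)) :
  adjC (X *m selE C K) = (selE C K)^T *m adjC X.
Proof.
rewrite /adjC trmx_mul map_mxM; congr (_ *m _).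
by apply/matrixP => i j; rewrite !mxE rmorph_nat.
Qed.

Theorem proposition12 :
  (forall (R : rcfType) (N M k : nat) (Phi : 'M[R]_(N, M)) (Psi : 'M[R]_(M - N, M)),
     parsevalR Phi -> naimarkR Phi Psi -> (k <= minn N (M - N))%N ->
     (forall K : {set 'I_M}, #|K| = k -> vkR (colsubset K Phi) = cR R M N k) ->
     forall K : {set 'I_M}, #|K| = k -> vkR (colsubset K Psi) = cR R M (M - N) k)
  /\
  (forall (C : numClosedFieldType) (N M k : nat) (Phi : 'M[C]_(N, M))
          (Psi : 'M[C]_(M - N, M)),
     parsevalC Phi -> naimarkC Phi Psi -> (k <= minn N (M - N))%N ->
     (forall K : {set 'I_M}, #|K| = k -> vkC (colsubset K Phi) = cC C M N k) ->
     forall K : {set 'I_M}, #|K| = k -> vkC (colsubset K Psi) = cC C M (M - N) k).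
Proof.
split.
  move=> R N M k Phi Psi hP hN; rewrite leq_min => /andP[kN kMN] hyp K hK.
  have NM := NleM hP.
  have kM : (k <= M)%N by lia.
  rewrite /vkR /cR colsubset_sel trmx_mul mulmxA -(mulmxA _ Psi^T) hN.
  rewrite (core hP kN kMN) //.
  move=> T hT; apply: sqrt_inj_pos.
    by rewrite mulr_gt0 // ?invr_gt0 ltr0n bin_gt0.
  by rewrite -/(cR R M N k) -(hyp T hT) /vkR colsubset_sel trmx_mul !mulmxA.
move=> C N M k Phi Psi hP hN; rewrite leq_min => /andP[kN kMN] hyp K hK.
have NM := NleM hP.
rewrite /vkC /cC colsubset_sel adjC_sel mulmxA -(mulmxA _ (adjC Psi)) hN.
rewrite (core hP kN kMN) //.
move=> T hT; apply: sqrtC_inj.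
by rewrite -/(cC C M N k) -(hyp T hT) /vkC colsubset_sel adjC_sel !mulmxA.
Qed.
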